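(* Let $\mu<\lambda$ with $\nu=\sqrt{\lambda^2-\mu^2}\in(0,1)$, and let $\alpha\in\mathbb R$, $\vartheta\in(0,\pi)$. Then $PCT\,f_{(\alpha,\vartheta)\,\nu,\mathbf p}$ is a constant multiple of $f_{(\alpha,\vartheta)\,\nu,\mathbf p}$ (for all $\mathbf p$) only if $\vartheta=\pi\nu$; and for every $\alpha\in\mathbb R$, $$PCT\,f_{(\alpha,\pi\nu)\,\nu,\mathbf p}=-i\,f_{(\alpha,\pi\nu)\,\nu,\mathbf p}.$$
   Context: Fix $\omega>0$; work in the conformal chart $(t,\mathbf x)$, $t<0$, $\mathbf x\in\mathbb R^3$, of de Sitter spacetime. Let $\mu=m/\omega$ ($m$ the mass), $\lambda>0$ the coupling constant, $\mu<\lambda$, $\nu=\sqrt{\lambda^2-\mu^2}$. $J_a$ is the Bessel function of the first kind. Square-root convention: for $x>0$, $\sqrt x>0$ and $\sqrt{-x}=-i\sqrt x$; $\sqrt{ab}$ is read as $\sqrt a\sqrt b$. For $\alpha\in\mathbb R$, real $\vartheta$ with $\sin\vartheta\ne0$, define $$f_{(\alpha,\vartheta)\,\nu,\mathbf p}(t,\mathbf x)=\sqrt{\frac{\pi}{\omega}}\frac{i}{2\sqrt{\sin\pi\nu}\sqrt{\sin\vartheta}}\frac{(-\omega t)^{3/2}}{(2\pi)^{3/2}}\Big[e^{-\frac12 i\vartheta-\alpha}J_\nu(-pt)-e^{\frac12 i\vartheta+\alpha}J_{-\nu}(-pt)\Big]e^{i\mathbf x\cdot\mathbf p},\quad p=|\mathbf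 p|.$$ Operators: $(Pf)(t,\mathbf x)=f(t,-\mathbf x)$; $Cf=f^*$ (antilinear); $T$ replaces $t$ by $-t$ in this formula, where the multivalued factors are continued as $(-\omega(-t))^{3/2}=e^{\frac32 i\pi}(-\omega t)^{3/2}$ and $J_a(-s)=e^{i\pi a}J_a(s)$ for $s>0$ and any index $a$; $PCT=P\circ C\circ T$. *)

(* Defs.v *)
From Stdlib Require Import Arith Reals Lra ClassicalEpsilon.
Open Scope R_scope.

Definition Cplx : Type := (R * R)%type.
Definition RtoC (r : R) : Cplx := (r, 0).
Definition Ci : Cplx := (0, 1).
Definition Cadd (z w : Cplx) : Cplx := (fst z + fst w, snd z + snd w).
Definition Copp (z : Cplx) : Cplx := (- fst z, - snd z).
Definition Csub (z w : Cplx) : Cplx := Cadd z (Copp w).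
Definition Cmul (z w : Cplx) : Cplx :=
  (fst z * fst w - snd z * snd w, fst z * snd w + snd z * fst w).
Definition Cinv (z : Cplx) : Cplx :=
  let d := fst z * fst z + snd z * snd z in (fst z / d, - snd z / d).
Definition Cconj (z : Cplx) : Cplx := (fst z, - snd z).
Definition Cexp (z : Cplx) : Cplx := (exp (fst z) * cos (snd z), exp (fst z) * sin (snd z)).

(* square root of a real number with the paper's convention:
   sqrt x > 0 for x > 0, sqrt(-x) = -i sqrt x for x > 0 *)
Definition csqrtR (x : R) : Cplx :=
  if Rle_dec 0 x then RtoC (sqrt x) else (0, - sqrt (- x)).

Definition R3 : Type := (R * R * R)%type.
Definition dot3 (x y : R3) : R :=
  let '(x1, x2, x3) := x in let '(y1, y2, y3) := y in x1 * y1 + x2 * y2 + x3 * y3.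
Definition norm3 (x : R3) : R := sqrt (dot3 x x).
Definition neg3 (x : R3) : R3 := let '(x1, x2, x3) := x in (- x1, - x2, - x3).
Definition zero3 : R3 := (0, 0, 0).

(* ---------- reciprocal Gamma function (entire), via Gauss's limit ----------
   1/Gamma(z) = lim_{n -> oo} z (z+1) ... (z+n) / (n! n^z)                  *)
Fixpoint rising (z : R) (n : nat) : R :=
  match n with O => z | S k => rising z k * (z + INR (S k)) end.
Definition rgamma_seq (z : R) (n : nat) : R :=
  rising z n / (INR (fact n) * Rpower (INR n) z).
Definition rgamma (z : R) : R := epsilon (inhabits 0) (fun l => Un_cv (rgamma_seq z) l).

Definition besselJ_term (a s : R) (k : nat) : R :=
  (-1) ^ k / INR (fact k) * rgamma (INR k + a + 1) * Rpower (s / 2) (2 * INR k + a).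
Definition besselJ (a s : R) : R :=
  epsilon (inhabits 0) (fun l => infinite_sum (besselJ_term a s) l).

Definition nu_of (omega m lambda : R) : R := sqrt (lambda ^ 2 - (m / omega) ^ 2).

(* Generic shape of the formula for f, parametrised by the factor standing in
   the place of (-omega t)^(3/2) and by the functions standing in the place of
   J_a(-p t). *)
Definition f_gen (omega nu alpha theta : R) (A : R -> Cplx) (Jf : R -> R -> Cplx)
    (p : R3) (t : R) (x : R3) : Cplx :=
  Cmul (Cmul (Cmul (Cmul
    (RtoC (sqrt (PI / omega)))
    (Cmul Ci (Cinv (Cmul (RtoC 2) (Cmul (csqrtR (sin (PI * nu))) (csqrtR (sin theta)))))))
    (Cmul (A t) (RtoC (/ Rpower (2 * PI) (3 / 2)))))
    (Csub (Cmul (Cexp (- alpha, - theta / 2)) (Jf nu t))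
          (Cmul (Cexp (alpha, theta / 2)) (Jf (- nu) t))))
    (Cexp (0, dot3 x p)).

Definition fmode (omega nu alpha theta : R) (p : R3) : R -> R3 -> Cplx :=
  f_gen omega nu alpha theta
    (fun t => RtoC (Rpower (- omega * t) (3 / 2)))
    (fun a t => RtoC (besselJ a (- norm3 p * t))) p.

(* T f: t replaced by -t in the formula, with
   (-omega(-t))^(3/2) = e^{3 i pi/2} (-omega t)^(3/2)   and
   J_a(-p(-t)) = J_a(-(-p t)) = e^{i pi a} J_a(-p t). *)
Definition T_fmode (omega nu alpha theta : R) (p : R3) : R -> R3 -> Cplx :=
  f_gen omega nu alpha theta
    (fun t => Cmul (Cexp (0, 3 * PI / 2)) (RtoC (Rpower (- omega * t) (3 / 2))))
    (fun a t => Cmul (Cexp (0, PI * a)) (RtoC (besselJ a (- norm3 p * t)))) p.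

Definition Pop (F : R -> R3 -> Cplx) : R -> R3 -> Cplx := fun t x => F t (neg3 x).
Definition Cop (F : R -> R3 -> Cplx) : R -> R3 -> Cplx := fun t x => Cconj (F t x).

Definition PCT_fmode (omega nu alpha theta : R) (p : R3) : R -> R3 -> Cplx :=
  Pop (Cop (T_fmode omega nu alpha theta p)).

(* Main.v *)
Require Import Defs.
From Stdlib Require Import Reals Lra Lia ClassicalEpsilon.
From Coquelicot Require Import Rcomplements Rbar Lim_seq Hierarchy Series PSeries Continuity Derive.
Open Scope R_scope.

Lemma ln_le_sub1 w : 0 < w -> ln w <= w - 1.
Proof. intros Hw. pose proof (exp_ineq1_le (ln w)). rewrite exp_ln in H by lra. lra. Qed.

Lemma ln1p_bounds y : 0 <= y -> y - y * y <= ln (1 + y) <= y.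
Proof.
  intros Hy. split.
  - pose proof (ln_le_sub1 (/ (1 + y)) ltac:(apply Rinv_0_lt_compat; lra)).
    rewrite ln_Rinv in H by lra.
    assert (/ (1 + y) - 1 = - y / (1 + y)) by (field; lra).
    assert (y / (1 + y) >= y - y * y).
    { apply Rle_ge. apply (Rmult_le_reg_r (1 + y)); [lra|].
      unfold Rdiv. rewrite Rmult_assoc, Rinv_l by lra. nra. }
    unfold Rdiv in *. lra.
  - destruct (Rle_or_lt (ln (1 + y)) y) as [h|h]; [exact h|].
    apply exp_increasing in h. rewrite exp_ln in h by lra.
    pose proof (exp_ineq1_le y). lra.
Qed.

Lemma rising_pos z n : 0 < z -> 0 < rising z n.
Proof.
  intros Hz; induction n; [simpl; lra|].
  change (rising z (S n)) with (rising z n * (z + INR (S n))).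
  apply Rmult_lt_0_compat; [lra|]. pose proof (pos_INR (S n)). lra.
Qed.

Lemma g_pos z n : 0 < z -> 0 < rgamma_seq z n.
Proof.
  intros Hz. unfold rgamma_seq. apply Rdiv_lt_0_compat; [apply rising_pos; lra|].
  apply Rmult_lt_0_compat; [apply INR_fact_lt_0|unfold Rpower; apply exp_pos].
Qed.

Lemma g_step z m : 0 < z ->
  rgamma_seq z (S m) = rgamma_seq z m * ((z + INR (S m)) / INR (S m)) *
    exp (z * ln (INR m) - z * ln (INR (S m))).
Proof.
  intros Hz. unfold rgamma_seq, Rpower. change (rising z (S m)) with (rising z m * (z + INR (S m))).
  rewrite fact_simpl, mult_INR. rewrite Rminus_def, exp_plus, exp_Ropp.
  pose proof (INR_fact_neq_0 m). pose proof (exp_pos (z * ln (INR m))).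
  pose proof (exp_pos (z * ln (INR (S m)))). pose proof (lt_0_INR (S m) ltac:(lia)).
  field. repeat split; lra.
Qed.

Lemma D_bound z m : 0 < z -> (1 <= m)%nat ->
  Rabs (ln (rgamma_seq z (S m)) - ln (rgamma_seq z m))
  <= (2 * z + z * z) * (/ INR m - / INR (S m)).
Proof.
  intros Hz Hm.
  pose proof (g_pos z m Hz) as Hg.
  assert (HN : 1 <= INR m) by (apply (le_INR 1); lia).
  rewrite S_INR. rewrite g_step by lra. rewrite S_INR.
  set (N := INR m) in *.
  rewrite ln_mult; [|apply Rmult_lt_0_compat; [lra|apply Rdiv_lt_0_compat; lra]|apply exp_pos].
  rewrite ln_mult by (first [lra | apply Rdiv_lt_0_compat; lra]).
  rewrite ln_exp.
  replace ((z + (N + 1)) / (N + 1)) with (1 + z / (N + 1)) by (field; lra).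
  assert (E : ln (N + 1) = ln N + ln (1 + / N)).
  { rewrite <- ln_mult by (first [lra | apply Rplus_lt_0_compat; [lra|apply Rinv_0_lt_compat; lra]]).
    f_equal. field. lra. }
  rewrite E.
  set (a := / N). set (b := / (N + 1)).
  assert (Ha : N * a = 1) by (unfold a; field; lra).
  assert (Hb : (N + 1) * b = 1) by (unfold b; field; lra).
  assert (Hb0 : 0 < b) by (unfold b; apply Rinv_0_lt_compat; lra).
  assert (Ha0 : 0 < a) by (unfold a; apply Rinv_0_lt_compat; lra).
  assert (Hab : a - b = a * b) by (unfold a, b; field; lra).
  assert (Hba : b <= a) by nra.
  assert (Ha2 : a <= 2 * b) by nra.
  replace (z / (N + 1)) with (z * b) by (unfold b; field; lra).
  destruct (ln1p_bounds (z * b)) as [L1 U1]; [nra|].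
  destruct (ln1p_bounds a) as [L2 U2]; [lra|].
  rewrite Hab.
  apply Rabs_le. split.
  - assert (z * b * (z * b) <= z * z * (a * b)) by (assert (0 <= z*z) by nra; nra).
    assert (z * ln (1 + a) <= z * a) by nra. nra.
  - assert (z * (a - a * a) <= z * ln (1 + a)) by nra.
    assert (z * (a * a) <= 2 * z * (a * b)) by (assert (0 <= z * a) by nra; nra).
    nra.
Qed.

Lemma inv_Sn_lim : is_lim_seq (fun n => / INR (S n)) 0.
Proof.
  apply (is_lim_seq_incr_1 (fun n => / INR n)).
  replace (Finite 0) with (Rbar_inv p_infty) by reflexivity.
  apply is_lim_seq_inv. apply is_lim_seq_INR. discriminate.
Qed.

Lemma gauss z : 0 < z -> exists G, 0 < G /\ Un_cv (rgamma_seq z) G /\ rgamma z = G.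
Proof.
  intros Hz.
  set (C := 2 * z + z * z).
  assert (HC : 0 < C) by (unfold C; nra).
  set (a := fun m => ln (rgamma_seq z (S m)) + C * / INR (S m)).
  set (b := fun m => ln (rgamma_seq z (S m)) - C * / INR (S m)).
  assert (Hsn : forall m, / INR (S (S m)) <= / INR (S m)).
  { intro m. apply Rinv_le_contravar. apply lt_0_INR; lia. apply le_INR; lia. }
  assert (Hdec : forall m, a (S m) <= a m).
  { intro m. unfold a. pose proof (D_bound z (S m) Hz ltac:(lia)) as D.
    apply Rabs_le_between in D. unfold C in *. lra. }
  assert (Hinc : forall m, b m <= b (S m)).
  { intro m. unfold b. pose proof (D_bound z (S m) Hz ltac:(lia)) as D.
    apply Rabs_le_between in D. unfold C in *. lra. }
  assert (Hbinc : forall m, b O <= b m).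
  { induction m; [lra|]. specialize (Hinc m). lra. }
  assert (Hlb : forall m, b O <= a m).
  { intro m. specialize (Hbinc m). unfold a, b in *.
    assert (0 <= C * / INR (S m)).
    { apply Rmult_le_pos; [lra|]. left; apply Rinv_0_lt_compat, lt_0_INR; lia. }
    lra. }
  destruct (proj1 (ex_finite_lim_seq_correct a) (ex_finite_lim_seq_decr a (b O) Hdec Hlb)) as [_ Hfin].
  pose proof (Lim_seq_correct' a (ex_finite_lim_seq_decr a (b O) Hdec Hlb)) as Ha.
  set (La := real (Lim_seq a)) in *.
  assert (HL : is_lim_seq (fun m => ln (rgamma_seq z (S m))) (La - C * 0)).
  { eapply is_lim_seq_ext; [|apply is_lim_seq_minus'; [exact Ha|apply is_lim_seq_mult'; [apply is_lim_seq_const|apply inv_Sn_lim]]].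
    intro m. unfold a. simpl. ring. }
  assert (HG : is_lim_seq (rgamma_seq z) (exp (La - C * 0))).
  { apply is_lim_seq_incr_1.
    eapply is_lim_seq_ext; [|apply (is_lim_seq_continuous exp); [|exact HL]].
    - intro m. simpl. apply exp_ln. apply g_pos; lra.
    - apply derivable_continuous_pt. apply derivable_exp. }
  apply is_lim_seq_Reals in HG.
  exists (exp (La - C * 0)). split; [apply exp_pos|]. split; [exact HG|].
  unfold rgamma. apply (UL_sequence (rgamma_seq z)); [|exact HG].
  apply epsilon_spec. exists (exp (La - C * 0)). exact HG.
Qed.

Lemma rising_shift z n : rising z (S n) = z * rising (z + 1) n.
Proof.
  induction n.
  - simpl. ring.
  - change (rising z (S (S n))) with (rising z (S n) * (z + INR (S (S n)))).
    change (rising (z + 1) (S n)) with (rising (z + 1) n * (z + 1 + INR (S n))).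
    rewrite IHn. rewrite (S_INR (S n)). ring.
Qed.

Lemma lndiff_lim : is_lim_seq (fun m => ln (INR (S (S m))) - ln (INR (S m))) 0.
Proof.
  apply (is_lim_seq_le_le (fun _ => 0) _ (fun m => / INR (S m))).
  - intro m. assert (HN : 0 < INR (S m)) by (apply lt_0_INR; lia).
    rewrite (S_INR (S m)).
    replace (INR (S m) + 1) with (INR (S m) * (1 + / INR (S m))) by (field; lra).
    rewrite ln_mult by (first [lra | pose proof (Rinv_0_lt_compat _ HN); lra]).
    destruct (ln1p_bounds (/ INR (S m))) as [L U]; [left; apply Rinv_0_lt_compat; lra|].
    assert (0 <= / INR (S m) - / INR (S m) * / INR (S m)).
    { assert (/ INR (S m) <= 1).
      { replace 1 with (/ 1) by field. apply Rinv_le_contravar; [lra|].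
        rewrite S_INR; pose proof (pos_INR m); lra. }
      pose proof (Rinv_0_lt_compat _ HN). nra. }
    lra.
  - apply is_lim_seq_const.
  - apply inv_Sn_lim.
Qed.

Lemma rgamma_rec z : 0 < z -> rgamma (z + 1) = rgamma z / z.
Proof.
  intros Hz.
  destruct (gauss z Hz) as [G [HG0 [HG HGe]]].
  destruct (gauss (z + 1) ltac:(lra)) as [G' [HG'0 [HG' HG'e]]].
  rewrite HGe, HG'e.
  apply is_lim_seq_Reals in HG, HG'.
  apply (proj1 (is_lim_seq_incr_1 _ _)) in HG'.
  apply (proj1 (is_lim_seq_incr_1 _ _)) in HG.
  apply (proj1 (is_lim_seq_incr_1 _ _)) in HG.
  assert (HE : is_lim_seq (fun m => exp ((z + 1) * (ln (INR (S (S m))) - ln (INR (S m))))) (exp ((z + 1) * 0))).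
  { apply (is_lim_seq_continuous (fun y => exp ((z + 1) * y))).
    - apply derivable_continuous_pt. apply derivable_pt_comp.
      + apply derivable_pt_scal. apply derivable_pt_id.
      + apply derivable_exp.
    - apply lndiff_lim. }
  rewrite Rmult_0_r, exp_0 in HE.
  assert (Hp := is_lim_seq_mult' _ _ _ _ HG HE).
  assert (Hq := is_lim_seq_mult' _ _ _ _ Hp (is_lim_seq_const (/ z))).
  assert (Hr : is_lim_seq (fun n => rgamma_seq (z + 1) (S n)) (G * 1 * / z)).
  { eapply is_lim_seq_ext; [|exact Hq]. intro m. cbv beta.
    unfold rgamma_seq.
    rewrite (rising_shift z (S m)).
    rewrite (fact_simpl (S m)), mult_INR.
    assert (H1 : 0 < INR (S m)) by (apply lt_0_INR; lia).
    assert (H2 : 0 < INR (S (S m))) by (apply lt_0_INR; lia).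
    pose proof (INR_fact_neq_0 (S m)).
    unfold Rpower.
    replace ((z + 1) * (ln (INR (S (S m))) - ln (INR (S m)))) with
      ((z * ln (INR (S (S m))) + ln (INR (S (S m)))) + - ((z + 1) * ln (INR (S m)))) by ring.
    rewrite exp_plus, exp_plus, exp_Ropp, exp_ln by lra.
    pose proof (exp_pos (z * ln (INR (S (S m))))).
    pose proof (exp_pos ((z + 1) * ln (INR (S m)))).
    field. repeat split; lra. }
  apply is_lim_seq_unique in HG', Hr. rewrite HG' in Hr. injection Hr. intros ->. field. lra.
Qed.

Lemma rgamma_pos z : 0 < z -> 0 < rgamma z.
Proof. intros Hz. destruct (gauss z Hz) as [G [? [? ->]]]. exact H. Qed.

Lemma rgamma_shift_bounds z k : 0 < z ->
  0 < rgamma (z + INR k) /\ ((1 <= k)%nat -> rgamma (z + INR k) <= rgamma z / z).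
Proof.
  intros Hz. induction k.
  - simpl. rewrite Rplus_0_r. split; [apply rgamma_pos; lra| intros; lia].
  - destruct IHk as [Hp Hb].
    assert (E : z + INR (S k) = (z + INR k) + 1) by (rewrite S_INR; ring).
    pose proof (pos_INR k).
    rewrite E, rgamma_rec by lra.
    split.
    + apply Rdiv_lt_0_compat; lra.
    + intros _. destruct k.
      * simpl. rewrite Rplus_0_r. lra.
      * specialize (Hb ltac:(lia)).
        assert (1 <= z + INR (S k)) by (rewrite S_INR; pose proof (pos_INR k); lra).
        apply Rle_trans with (rgamma (z + INR (S k))); [|exact Hb].
        unfold Rdiv. rewrite <- (Rmult_1_r (rgamma (z + INR (S k)))) at 2.
        apply Rmult_le_compat_l; [lra|].
        replace 1 with (/ 1) by field. apply Rinv_le_contravar; lra.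
Qed.

Lemma term_eq a s k : 0 < s ->
  besselJ_term a s k = (-1) ^ k / INR (Factorial.fact k) * rgamma ((a + 1) + INR k) * Rpower (s / 2) a * ((s / 2) * (s / 2)) ^ k.
Proof.
  intros Hs. unfold besselJ_term.
  rewrite Rpower_plus.
  replace (2 * INR k) with (INR (2 * k)) by (rewrite mult_INR; simpl; ring).
  rewrite Rpower_pow by lra. rewrite pow_mult.
  replace (INR k + a + 1) with (a + 1 + INR k) by ring. replace ((s / 2) ^ 2) with (s / 2 * (s / 2)) by ring. ring.
Qed.

Lemma J_approx a s : 0 < a + 1 -> 0 < s -> (s / 2) * (s / 2) <= (a + 1) / 4 -> (s / 2) * (s / 2) <= 1 / 4 ->
  Rabs (besselJ a s - rgamma (a + 1) * Rpower (s / 2) a) <= rgamma (a + 1) * Rpower (s / 2) a / 3.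
Proof.
  intros Hz Hs HX1 HX2.
  set (z := a + 1) in *. set (X := s / 2 * (s / 2)) in *. set (P := Rpower (s / 2) a).
  set (Rz := rgamma z).
  assert (HP : 0 < P) by (unfold P, Rpower; apply exp_pos).
  assert (HRz : 0 < Rz) by (apply rgamma_pos; lra).
  assert (HX0 : 0 <= X) by (unfold X; nra).
  assert (HXa : Rabs X < 1) by (rewrite Rabs_pos_eq; lra).
  assert (Hb : forall k, Rabs (besselJ_term a s k) <= (Rz + Rz / z) * P * X ^ k).
  { intro k. rewrite term_eq by lra. fold z P X.
    destruct (rgamma_shift_bounds z k Hz) as [Hp Hbd].
    rewrite !Rabs_mult. unfold Rdiv. rewrite Rabs_mult, pow_1_abs, Rmult_1_l.
    rewrite Rabs_inv, (Rabs_pos_eq (INR _)) by (apply pos_INR).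
    rewrite (Rabs_pos_eq (rgamma _)) by lra. rewrite (Rabs_pos_eq P) by lra.
    rewrite (Rabs_pos_eq (X ^ k)) by (apply pow_le; lra).
    assert (Hf : / INR (Factorial.fact k) <= 1).
    { replace 1 with (/ 1) by field. apply Rinv_le_contravar; [lra|].
      pose proof (INR_fact_lt_0 k). pose proof (Factorial.fact_neq_0 k). apply (le_INR 1). lia. }
    assert (Hr : rgamma (z + INR k) <= Rz + Rz / z).
    { destruct k.
      - simpl. rewrite Rplus_0_r. fold Rz. assert (0 <= Rz / z) by (apply Rdiv_le_0_compat; lra). lra.
      - specialize (Hbd ltac:(lia)). fold Rz in Hbd. lra. }
    pose proof (pow_le X k HX0). pose proof (Rinv_0_lt_compat _ (INR_fact_lt_0 k)).
    apply Rmult_le_compat_r; [lra|].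
    apply Rmult_le_compat_r; [lra|].
    unfold Rdiv in Hr. rewrite <- (Rmult_1_l (Rz + Rz * / z)).
    apply Rmult_le_compat; lra. }
  assert (Hb1 : forall k, Rabs (besselJ_term a s (S k)) <= Rz / z * P * X ^ (S k)).
  { intro k. rewrite term_eq by lra. fold z P X.
    destruct (rgamma_shift_bounds z (S k) Hz) as [Hp Hbd].
    specialize (Hbd ltac:(lia)). fold Rz in Hbd.
    rewrite !Rabs_mult. unfold Rdiv. rewrite Rabs_mult, pow_1_abs, Rmult_1_l.
    rewrite Rabs_inv, (Rabs_pos_eq (INR _)) by (apply pos_INR).
    rewrite (Rabs_pos_eq (rgamma _)) by lra. rewrite (Rabs_pos_eq P) by lra.
    rewrite (Rabs_pos_eq (X ^ _)) by (apply pow_le; lra).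
    assert (Hf : / INR (Factorial.fact (S k)) <= 1).
    { replace 1 with (/ 1) by field. apply Rinv_le_contravar; [lra|].
      pose proof (Factorial.fact_neq_0 (S k)). apply (le_INR 1). lia. }
    pose proof (pow_le X (S k) HX0). pose proof (Rinv_0_lt_compat _ (INR_fact_lt_0 (S k))).
    apply Rmult_le_compat_r; [lra|].
    apply Rmult_le_compat_r; [lra|].
    unfold Rdiv in Hbd. rewrite <- (Rmult_1_l (Rz * / z)).
    apply Rmult_le_compat; lra. }
  assert (Hexa : ex_series (fun k => Rabs (besselJ_term a s k))).
  { apply (@ex_series_le R_AbsRing R_CompleteNormedModule _ (fun k => (Rz + Rz / z) * P * X ^ k)).
    - intro n. change (norm (Rabs (besselJ_term a s n))) with (Rabs (Rabs (besselJ_term a s n))).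
      rewrite Rabs_Rabsolu. apply Hb.
    - apply (ex_series_scal_l ((Rz + Rz / z) * P) (fun k => X ^ k)). apply ex_series_geom. exact HXa. }
  assert (Hex : ex_series (besselJ_term a s)) by (apply ex_series_Rabs; exact Hexa).
  assert (HJ : besselJ a s = Series (besselJ_term a s)).
  { unfold besselJ. apply (uniqueness_sum (besselJ_term a s)); [|apply is_series_Reals, Series_correct, Hex].
    apply epsilon_spec. exists (Series (besselJ_term a s)). apply is_series_Reals, Series_correct, Hex. }
  rewrite HJ, Series_incr_1 by exact Hex.
  assert (H0 : besselJ_term a s 0 = Rz * P).
  { rewrite term_eq by lra. simpl. rewrite Rplus_0_r. fold z Rz P. field. }
  rewrite H0. replace (Rz * P + Series (fun k => besselJ_term a s (S k)) - Rz * P)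
    with (Series (fun k => besselJ_term a s (S k))) by ring.
  assert (Hexs : ex_series (fun k => Rabs (besselJ_term a s (S k)))).
  { apply (ex_series_incr_1 (fun k => Rabs (besselJ_term a s k))). exact Hexa. }
  eapply Rle_trans; [apply Series_Rabs; exact Hexs|].
  eapply Rle_trans.
  { apply (Series_le _ (fun k => (Rz / z * P * X) * X ^ k)).
    - intro n. split; [apply Rabs_pos|]. rewrite (Rmult_comm _ (X ^ n)).
      replace (X ^ n * (Rz / z * P * X)) with (Rz / z * P * X ^ (S n)) by (simpl; ring). apply Hb1.
    - apply (ex_series_scal_l (Rz / z * P * X) (fun k => X ^ k)). apply ex_series_geom. exact HXa. }
  rewrite Series_scal_l, Series_geom by exact HXa.
  assert (HXX : X * / (1 - X) <= z / 3).
  { apply (Rmult_le_reg_r (1 - X)); [lra|]. rewrite Rmult_assoc, Rinv_l by lra. nra. }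
  assert (0 < Rz / z * P) by (apply Rmult_lt_0_compat; [apply Rdiv_lt_0_compat|]; lra).
  replace (Rz / z * P * X * / (1 - X)) with (Rz / z * P * (X * / (1 - X))) by ring.
  apply Rle_trans with (Rz / z * P * (z / 3)); [apply Rmult_le_compat_l; lra|].
  right. field. lra.
Qed.

Lemma J_bounds a s : 0 < a + 1 -> 0 < s -> (s / 2) * (s / 2) <= (a + 1) / 4 -> (s / 2) * (s / 2) <= 1 / 4 ->
  2 / 3 * (rgamma (a + 1) * Rpower (s / 2) a) <= besselJ a s <= 4 / 3 * (rgamma (a + 1) * Rpower (s / 2) a).
Proof.
  intros. pose proof (J_approx a s H H0 H1 H2) as HA. apply Rabs_le_between in HA. lra.
Qed.

Lemma indep nu : 0 < nu < 1 -> forall u v,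
  (forall s, 0 < s -> u * besselJ nu s = v * besselJ (- nu) s) -> u = 0 /\ v = 0.
Proof.
  intros Hn u v H.
  set (X0 := (1 - nu) / 4).
  assert (HX0 : 0 < X0) by (unfold X0; lra).
  set (s1 := 2 * sqrt X0).
  assert (Hs1 : 0 < s1) by (unfold s1; pose proof (sqrt_lt_R0 _ HX0); lra).
  assert (HX1 : s1 / 2 * (s1 / 2) = X0) by (unfold s1; replace (2 * sqrt X0 / 2) with (sqrt X0) by field; apply sqrt_sqrt; lra).
  set (q := exp (- (2 / nu))).
  assert (Hq0 : 0 < q) by apply exp_pos.
  assert (Hq1 : q < 1).
  { unfold q. rewrite <- exp_0. apply exp_increasing.
    assert (0 < 2 / nu) by (apply Rdiv_lt_0_compat; lra). lra. }
  set (s2 := s1 * q).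
  assert (Hs2 : 0 < s2) by (unfold s2; nra).
  assert (HX2 : s2 / 2 * (s2 / 2) <= X0).
  { replace (s2 / 2 * (s2 / 2)) with (s1 / 2 * (s1 / 2) * (q * q)) by (unfold s2; field).
    rewrite HX1. assert (q * q < 1) by nra. nra. }
  assert (B11 := J_bounds nu s1 ltac:(lra) Hs1 ltac:(unfold X0 in *; lra) ltac:(unfold X0 in *; lra)).
  assert (B12 := J_bounds nu s2 ltac:(lra) Hs2 ltac:(unfold X0 in *; lra) ltac:(unfold X0 in *; lra)).
  assert (B21 := J_bounds (- nu) s1 ltac:(lra) Hs1 ltac:(unfold X0 in *; lra) ltac:(unfold X0 in *; lra)).
  assert (B22 := J_bounds (- nu) s2 ltac:(lra) Hs2 ltac:(unfold X0 in *; lra) ltac:(unfold X0 in *; lra)).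
  assert (HR1 : 0 < rgamma (nu + 1)) by (apply rgamma_pos; lra).
  assert (HR2 : 0 < rgamma (- nu + 1)) by (apply rgamma_pos; lra).
  assert (Hln : ln (s2 / 2) = ln (s1 / 2) - 2 / nu).
  { unfold s2, q. replace (s1 * exp (- (2 / nu)) / 2) with (s1 / 2 * exp (- (2 / nu))) by field.
    rewrite ln_mult by (first [apply exp_pos | lra]). rewrite ln_exp. ring. }
  assert (Pa : Rpower (s1 / 2) nu * Rpower (s2 / 2) (- nu) = exp 2).
  { unfold Rpower. rewrite <- exp_plus. f_equal. rewrite Hln. field. lra. }
  assert (Pb : Rpower (s2 / 2) nu * Rpower (s1 / 2) (- nu) = exp (- 2)).
  { unfold Rpower. rewrite <- exp_plus. f_equal. rewrite Hln. field. lra. }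
  set (P11 := Rpower (s1 / 2) nu) in *. set (P12 := Rpower (s2 / 2) nu) in *.
  set (P21 := Rpower (s1 / 2) (- nu)) in *. set (P22 := Rpower (s2 / 2) (- nu)) in *.
  assert (0 < P11) by (unfold P11, Rpower; apply exp_pos).
  assert (0 < P12) by (unfold P12, Rpower; apply exp_pos).
  assert (0 < P21) by (unfold P21, Rpower; apply exp_pos).
  assert (0 < P22) by (unfold P22, Rpower; apply exp_pos).
  assert (He : exp (- 2) * exp (- 2) * 4 < 1).
  { pose proof (exp_ineq1 1 ltac:(lra)). pose proof (exp_pos 1).
    assert (exp 2 = exp 1 * exp 1) by (rewrite <- exp_plus; f_equal; ring).
    assert (exp (- 2) * exp 2 = 1) by (rewrite <- exp_plus; rewrite <- exp_0; f_equal; ring).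
    pose proof (exp_pos (-2)).
    assert (4 < exp 2) by nra.
    assert (exp (-2) * 4 < 1) by nra.
    assert (exp (-2) < 1) by nra. nra. }
  set (R1 := rgamma (nu + 1)) in *. set (R2 := rgamma (- nu + 1)) in *.
  set (J11 := besselJ nu s1) in *. set (J12 := besselJ nu s2) in *.
  set (J21 := besselJ (- nu) s1) in *. set (J22 := besselJ (- nu) s2) in *.
  assert (E1 := H s1 Hs1). assert (E2 := H s2 Hs2). fold J11 J21 in E1. fold J12 J22 in E2.
  assert (HD : 0 < J11 * J22 - J12 * J21).
  { assert (L1 : 4 / 9 * (R1 * R2 * exp 2) <= J11 * J22).
    { rewrite <- Pa. assert (0 <= 2/3 * (R1 * P11)) by nra. assert (0 <= 2/3 * (R2 * P22)) by nra.
      apply Rle_trans with ((2/3 * (R1 * P11)) * (2/3 * (R2 * P22))); [right; field|].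
      apply Rmult_le_compat; lra. }
    assert (L2 : J12 * J21 <= 16 / 9 * (R1 * R2 * exp (- 2))).
    { rewrite <- Pb. assert (0 <= J12) by nra. assert (0 <= J21) by nra.
      apply Rle_trans with ((4/3 * (R1 * P12)) * (4/3 * (R2 * P21))); [|right; field].
      apply Rmult_le_compat; lra. }
    assert (0 < R1 * R2) by nra.
    assert (exp (- 2) * exp 2 = 1) by (rewrite <- exp_plus; rewrite <- exp_0; f_equal; ring).
    pose proof (exp_pos 2). pose proof (exp_pos (-2)).
    assert (exp (-2) < exp 2 / 4).
    { apply (Rmult_lt_reg_r (exp (-2) * 4)); [nra|]. field_simplify; nra. }
    nra. }
  assert (Hu : u * (J11 * J22 - J12 * J21) = 0).
  { replace (u * (J11 * J22 - J12 * J21)) with ((u * J11) * J22 - (u * J12) * J21) by ring.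
    rewrite E1, E2. ring. }
  assert (Hv : v * (J11 * J22 - J12 * J21) = 0).
  { replace (v * (J11 * J22 - J12 * J21)) with ((v * J22) * J11 - (v * J21) * J12) by ring.
    rewrite <- E1, <- E2. ring. }
  apply Rmult_integral in Hu. apply Rmult_integral in Hv. lra.
Qed.



Lemma abs_conj (X W Ar g e1 w1 e2 w2 J1 J2 E : Cplx) :
 fst X = 0 -> W = (0,-1) -> snd Ar = 0 -> snd g = 0 -> snd J1 = 0 -> snd J2 = 0 ->
 Cconj (Cmul (Cmul (Cmul X (Cmul (Cmul W Ar) g)) (Csub (Cmul e1 (Cmul w1 J1)) (Cmul e2 (Cmul w2 J2)))) (Cconj E))
 = Cmul (Copp Ci) (Cmul (Cmul (Cmul X (Cmul Ar g)) (Csub (Cmul (Cconj (Cmul e1 w1)) J1) (Cmul (Cconj (Cmul e2 w2)) J2))) E).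
Proof.
  destruct X as [x1 x2], Ar as [a1 a2], g as [g1 g2], e1 as [p1 p2], w1 as [q1 q2],
   e2 as [r1 r2], w2 as [s1 s2], J1 as [j1 j1'], J2 as [j2 j2'], E as [u1 u2].
  simpl. intros -> -> -> -> -> ->.
  unfold Cconj, Cmul, Csub, Cadd, Copp, Ci; simpl. f_equal; ring.
Qed.

Lemma Cexp_neg_conj (d : R) : Cexp (0, - d) = Cconj (Cexp (0, d)).
Proof. unfold Cexp, Cconj; simpl. rewrite cos_neg, sin_neg. f_equal; ring. Qed.

Lemma dot3_neg x p : dot3 (neg3 x) p = - dot3 x p.
Proof. destruct x as [[x1 x2] x3], p as [[p1 p2] p3]; simpl; ring. Qed.

Lemma W_eq : Cexp (0, 3 * PI / 2) = (0, -1).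
Proof.
  unfold Cexp; simpl. replace (3 * PI / 2) with (3 * (PI / 2)) by field.
  rewrite cos_3PI2, sin_3PI2, exp_0. f_equal; ring.
Qed.

Lemma conj_exp_mul a b c : Cconj (Cmul (Cexp (a, b)) (Cexp (0, c))) = Cexp (a, - (b + c)).
Proof.
  unfold Cconj, Cmul, Cexp; simpl. rewrite exp_0, cos_neg, sin_neg, cos_plus, sin_plus.
  f_equal; ring.
Qed.

Lemma pref_eq r a b : 0 < a -> 0 < b ->
  Cmul (RtoC r) (Cmul Ci (Cinv (Cmul (RtoC 2) (Cmul (csqrtR a) (csqrtR b)))))
  = (0, r / (2 * sqrt a * sqrt b)).
Proof.
  intros Ha Hb. unfold csqrtR.
  destruct (Rle_dec 0 a); [|lra]. destruct (Rle_dec 0 b); [|lra].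
  assert (Hsa := sqrt_lt_R0 a Ha). assert (Hsb := sqrt_lt_R0 b Hb).
  assert (E : Cmul (RtoC 2) (Cmul (RtoC (sqrt a)) (RtoC (sqrt b))) = (2 * sqrt a * sqrt b, 0)).
  { unfold Cmul, RtoC; simpl. f_equal; ring. }
  rewrite E. unfold Cinv, Cmul, RtoC, Ci; simpl. f_equal; field; lra.
Qed.

Definition Xof omega nu theta := Cmul (RtoC (sqrt (PI / omega)))
  (Cmul Ci (Cinv (Cmul (RtoC 2) (Cmul (csqrtR (sin (PI * nu))) (csqrtR (sin theta)))))).

Lemma PCT_form omega nu alpha theta p t x :
  0 < sin (PI * nu) -> 0 < sin theta ->
  PCT_fmode omega nu alpha theta p t x =
  Cmul (Copp Ci) (Cmul (Cmul (Cmul (Xof omega nu theta)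
     (Cmul (RtoC (Rpower (- omega * t) (3 / 2))) (RtoC (/ Rpower (2 * PI) (3 / 2)))))
   (Csub (Cmul (Cexp (- alpha, - (- theta / 2 + PI * nu))) (RtoC (besselJ nu (- norm3 p * t))))
         (Cmul (Cexp (alpha, - (theta / 2 + PI * - nu))) (RtoC (besselJ (- nu) (- norm3 p * t))))))
   (Cexp (0, dot3 x p))).
Proof.
  intros H1 H2.
  unfold PCT_fmode, Pop, Cop, T_fmode, f_gen. cbv beta.
  rewrite dot3_neg, Cexp_neg_conj, W_eq.
  rewrite abs_conj.
  - rewrite !conj_exp_mul. reflexivity.
  - rewrite pref_eq by assumption. reflexivity.
  - reflexivity.
  - reflexivity.
  - reflexivity.
  - reflexivity.
  - reflexivity.
Qed.

Lemma sinPInu nu : 0 < nu < 1 -> 0 < sin (PI * nu).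
Proof. intros. pose proof PI_RGT_0. apply sin_gt_0; nra. Qed.

Lemma part2 omega nu alpha p t x : 0 < nu < 1 ->
       PCT_fmode omega nu alpha (PI * nu) p t x
       = Cmul (Copp Ci) (fmode omega nu alpha (PI * nu) p t x).
Proof.
  intros Hn. pose proof (sinPInu nu Hn).
  rewrite PCT_form by assumption.
  unfold fmode, f_gen, Xof. cbv beta.
  replace (- (- (PI * nu) / 2 + PI * nu)) with (- (PI * nu) / 2) by field.
  replace (- (PI * nu / 2 + PI * - nu)) with (PI * nu / 2) by field.
  reflexivity.
Qed.

Lemma norm3_e1 : norm3 (1, 0, 0) = 1.
Proof. unfold norm3, dot3. replace (1*1+0*0+0*0) with 1 by ring. apply sqrt_1. Qed.

Lemma part1 omega nu alpha theta : 0 < omega -> 0 < nu < 1 -> 0 < theta < PI ->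
  (forall p : R3, p <> zero3 ->
        exists c : Cplx, forall (t : R) (x : R3), t < 0 ->
          PCT_fmode omega nu alpha theta p t x
          = Cmul c (fmode omega nu alpha theta p t x)) ->
  theta = PI * nu.
Proof.
  intros Hom Hn Ht H.
  pose proof (sinPInu nu Hn) as Hs1.
  assert (Hs2 : 0 < sin theta) by (apply sin_gt_0; lra).
  destruct (H (1,0,0)) as [[c1 c2] Hc].
  { intro E; injection E; intros; lra. }
  set (phi := theta / 2 - PI * nu).
  set (k := sqrt (PI / omega) / (2 * sqrt (sin (PI * nu)) * sqrt (sin theta))).
  set (g := / Rpower (2 * PI) (3 / 2)).
  assert (Hk : 0 < k).
  { unfold k. apply Rdiv_lt_0_compat.
    - apply sqrt_lt_R0. apply Rdiv_lt_0_compat; [apply PI_RGT_0|lra].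
    - pose proof (sqrt_lt_R0 _ Hs1); pose proof (sqrt_lt_R0 _ Hs2). nra. }
  assert (Hg : 0 < g) by (unfold g, Rpower; apply Rinv_0_lt_compat, exp_pos).
  assert (HC : 0 < sin (theta / 2)) by (apply sin_gt_0; lra).
  assert (Heq : forall s, 0 < s ->
    (exp (- alpha) * (cos phi - c1 * sin (theta/2) + c2 * cos (theta/2))) * besselJ nu s
    = (exp alpha * (cos phi + c1 * sin (theta/2) + c2 * cos (theta/2))) * besselJ (- nu) s /\
    (exp (- alpha) * (sin phi - c1 * cos (theta/2) - c2 * sin (theta/2))) * besselJ nu s
    = (exp alpha * (- sin phi - c1 * cos (theta/2) + c2 * sin (theta/2))) * besselJ (- nu) s).
  { intros s Hs.
    specialize (Hc (- s) zero3 ltac:(lra)).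
    rewrite PCT_form in Hc by assumption.
    unfold fmode, f_gen, Xof in Hc. cbv beta in Hc.
    rewrite pref_eq in Hc by assumption.
    replace (- norm3 (1, 0, 0) * - s) with s in Hc by (rewrite norm3_e1; ring).
    replace (- (- theta / 2 + PI * nu)) with phi in Hc by (unfold phi; field).
    replace (- (theta / 2 + PI * - nu)) with (- phi) in Hc by (unfold phi; field).
    replace (- theta / 2) with (- (theta / 2)) in Hc by field.
    fold k in Hc. fold g in Hc.
    set (A := Rpower (- omega * - s) (3 / 2)) in Hc.
    assert (HA : 0 < A) by (unfold A, Rpower; apply exp_pos).
    unfold Cmul, Csub, Cadd, Copp, Cexp, Ci, RtoC, dot3, zero3 in Hc; simpl in Hc.
    rewrite !cos_neg, !sin_neg in Hc.
    replace (0 * 1 + 0 * 0 + 0 * 0) with 0 in Hc by ring.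
    rewrite cos_0, sin_0, exp_0 in Hc.
    injection Hc as H1 H2.
    assert (Hq : 0 < k * A * g) by (apply Rmult_lt_0_compat; [apply Rmult_lt_0_compat|]; lra).
    split.
    - apply (Rmult_eq_reg_l (k * A * g)); [|lra]. lra.
    - apply (Rmult_eq_reg_l (k * A * g)); [|lra]. lra. }
  destruct (indep nu Hn _ _ (fun s Hs => proj1 (Heq s Hs))) as [U1 V1].
  destruct (indep nu Hn _ _ (fun s Hs => proj2 (Heq s Hs))) as [U2 V2].
  pose proof (exp_pos alpha); pose proof (exp_pos (- alpha)).
  apply Rmult_integral in U1; apply Rmult_integral in V1;
  apply Rmult_integral in U2; apply Rmult_integral in V2.
  destruct U1 as [U1|U1]; [lra|]. destruct V1 as [V1|V1]; [lra|].
  destruct U2 as [U2|U2]; [lra|]. destruct V2 as [V2|V2]; [lra|].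
  assert (Hc1 : c1 * sin (theta / 2) = 0) by lra.
  apply Rmult_integral in Hc1. destruct Hc1 as [Hc1|Hc1]; [|lra]. subst c1.
  assert (Hsin : sin (theta - PI * nu) = 0).
  { replace (theta - PI * nu) with (phi + theta / 2) by (unfold phi; field).
    rewrite sin_plus.
    replace (cos phi) with (- c2 * cos (theta / 2)) by lra.
    replace (sin phi) with (c2 * sin (theta / 2)) by lra. ring. }
  pose proof PI_RGT_0.
  destruct (Rtotal_order (theta - PI * nu) 0) as [Hl|[He|Hg']].
  - assert (Hneg : 0 < sin (- (theta - PI * nu))) by (apply sin_gt_0; nra).
    rewrite sin_neg in Hneg. lra.
  - lra.
  - assert (0 < sin (theta - PI * nu)) by (apply sin_gt_0; nra). lra.
Qed.

Theorem corollary6 (omega m lambda : R)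
  (Homega : 0 < omega) (Hlambda : 0 < lambda) (Hmu : m / omega < lambda)
  (Hnu : 0 < nu_of omega m lambda < 1) :
  (forall alpha theta : R, 0 < theta < PI ->
     (forall p : R3, p <> zero3 ->
        exists c : Cplx, forall (t : R) (x : R3), t < 0 ->
          PCT_fmode omega (nu_of omega m lambda) alpha theta p t x
          = Cmul c (fmode omega (nu_of omega m lambda) alpha theta p t x)) ->
     theta = PI * nu_of omega m lambda)
  /\
  (forall (alpha : R) (p : R3), p <> zero3 ->
     forall (t : R) (x : R3), t < 0 ->
       PCT_fmode omega (nu_of omega m lambda) alpha (PI * nu_of omega m lambda) p t x
       = Cmul (Copp Ci)
           (fmode omega (nu_of omega m lambda) alpha (PI * nu_of omega m lambda) p t x)).
Proof.
  split.
  - intros alpha theta Ht H. exact (part1 omega _ alpha theta Homega Hnu Ht H).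
  - intros alpha p _ t x _. apply part2. exact Hnu.
Qed.
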